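(* Let $\mathcal C=\mathcal C(I,A,(\rho_i)_{i\in I},(C^a)_{a\in A})$ be a connected Cartan scheme and $\mathcal R=\mathcal R(\mathcal C,(R^a)_{a\in A})$ a root system of type $\mathcal C$. Let $a\in A$ and $i,j\in I$ with $i\neq j$. The following are equivalent: (1) $c^a_{ij}=c^a_{ji}=-1$; (2) $R^a\cap(\mathbb N_0\alpha_i+\mathbb N_0\alpha_j)=\{\alpha_i,\alpha_i+\alpha_j,\alpha_j\}$; (3) $m^a_{i,j}=3$.
   Context: Let $I$ be a nonempty finite set and $\{\alpha_i\mid i\in I\}$ the standard basis of $\mathbb Z^I$; $\mathbb N_0=\{0,1,2,\dots\}$. A generalized Cartan matrix is $C=(c_{ij})_{i,j\in I}\in\mathbb Z^{I\times I}$ with $c_{ii}=2$, $c_{jk}\le0$ for $j\ne k$, and $c_{ij}=0\Rightarrow c_{ji}=0$. A Cartan scheme $\mathcal C=\mathcal C(I,A,(\rho_i)_{i\in I},(C^a)_{a\in A})$ consists of a nonempty set $A$, maps $\rho_i:A\to A$ and generalized Cartan matrices $C^a=(c^a_{jk})_{j,k\in I}$ such that (C1) $\rho_i^2=\mathrm{id}$ and (C2) $c^a_{ij}=c^{\rho_i(a)}_{ij}$ for all $a\in A$, $i,j\in I$. It is connected if the group generated by the $\rho_i$ acts transitively on $A$. For $i\in I$, $a\in A$ let $\sigma_i^a\in\mathrm{Aut}(\mathbb Z^I)$, $\sigma_i^a(\alpha_j)=\alpha_j-c^a_{ij}\alpha_i$. A root system of type $\mathcal C$ is a family $\mathcal R=\mathcal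 R(\mathcal C,(R^a)_{a\in A})$ of subsets $R^a\subset\mathbb Z^I$ such that, writing $R^a_+=R^a\cap\mathbb N_0^I$ and $m^a_{i,j}=|R^a\cap(\mathbb N_0\alpha_i+\mathbb N_0\alpha_j)|$, for all $a\in A$, $i,j\in I$: (R1) $R^a=R^a_+\cup(-R^a_+)$; (R2) $R^a\cap\mathbb Z\alpha_i=\{\alpha_i,-\alpha_i\}$; (R3) $\sigma_i^a(R^a)=R^{\rho_i(a)}$; (R4) if $i\neq j$ and $m^a_{i,j}$ is finite then $(\rho_i\rho_j)^{m^a_{i,j}}(a)=a$. *)

(* Defs.v *)
From mathcomp Require Import all_boot all_order all_algebra.
Set Implicit Arguments. Unset Strict Implicit. Unset Printing Implicit Defensive.
Import GRing.Theory Num.Theory.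
Local Open Scope ring_scope.

Notation vec I := {ffun I -> int}.

Definition alpha (I : finType) (i : I) : vec I :=
  [ffun k => if k == i then 1 else 0].

Definition nonneg_vec (I : finType) (v : vec I) : Prop := forall k, 0 <= v k.

Definition in_cone (I : finType) (i j : I) (v : vec I) : Prop :=
  exists p q : nat, v = alpha i *+ p + alpha j *+ q.

Definition card_eq (I : finType) (P : vec I -> Prop) (n : nat) : Prop :=
  exists s : seq (vec I), [/\ uniq s, size s = n & forall v, v \in s <-> P v].

Definition gen_cartan (I : finType) (c : I -> I -> int) : Prop :=
  [/\ forall i, c i i = 2,
      forall j k, j != k -> c j k <= 0
    & forall i j, c i j = 0 -> c j i = 0].

Definition cartan_scheme (I : finType) (A : Type)
  (rho : I -> A -> A) (C : A -> I -> I -> int) : Prop :=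
  [/\ forall a, gen_cartan (C a),
      forall i a, rho i (rho i a) = a
    & forall a i j, C a i j = C (rho i a) i j].

(* connected: the group generated by the rho_i acts transitively on A
   (since rho_i are involutions, the group elements are words in the rho_i) *)
Definition connected_scheme (I : finType) (A : Type) (rho : I -> A -> A) : Prop :=
  forall a b : A, exists w : seq I, foldr (fun i x => rho i x) a w = b.

(* sigma_i^a : alpha_j |-> alpha_j - c^a_ij alpha_i, extended Z-linearly *)
Definition sigma (I : finType) (A : Type) (C : A -> I -> I -> int)
  (i : I) (a : A) (v : vec I) : vec I :=
  v - alpha i *~ (\sum_(j : I) v j * C a i j).

Definition m_eq (I : finType) (A : Type) (R : A -> vec I -> Prop)
  (a : A) (i j : I) (n : nat) : Prop :=
  card_eq (fun v => R a v /\ in_cone i j v) n.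

Definition root_system (I : finType) (A : Type)
  (rho : I -> A -> A) (C : A -> I -> I -> int) (R : A -> vec I -> Prop) : Prop :=
  [/\ forall a v, R a v <->
          (R a v /\ nonneg_vec v) \/ (exists w, (R a w /\ nonneg_vec w) /\ v = - w),
      forall a i v, (R a v /\ exists k : int, v = alpha i *~ k) <->
          (v = alpha i \/ v = - alpha i),
      forall a i v, R (rho i a) v <-> exists w, R a w /\ sigma C i a w = v
    & forall a i j n, i != j -> m_eq R a i j n ->
          iter n (fun b => rho i (rho j b)) a = a].

(* Main.v *)
Require Import Defs.
From mathcomp Require Import all_boot all_order all_algebra.
From mathcomp Require Import zify ring lra.
Set Implicit Arguments. Unset Strict Implicit.
Import Order.TTheory GRing.Theory Num.Theory.
Local Open Scope ring_scope.

Definition L (I : finType) (i j : I) (x y : int) : vec I := alpha i *~ x + alpha j *~ y.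

Lemma L_coord (I : finType) (i j k : I) x y :
  L i j x y k = (k == i)%:R * x + (k == j)%:R * y.
Proof. rewrite /L ffunE !ffunMzE /alpha !ffunE. by case: (k == i); case: (k == j); rewrite ?mul0r ?mul1r ?mul0rz ?intz. Qed.

Lemma L_i (I : finType) (i j : I) x y : i != j -> L i j x y i = x.
Proof. by move=> ij; rewrite L_coord eqxx (negbTE ij) mul1r mul0r addr0. Qed.
Lemma L_j (I : finType) (i j : I) x y : i != j -> L i j x y j = y.
Proof. by move=> ij; rewrite L_coord eqxx eq_sym (negbTE ij) mul1r mul0r add0r. Qed.
Lemma L_swap (I : finType) (i j : I) x y : L i j x y = L j i y x.
Proof. by rewrite /L addrC. Qed.
Lemma L_inj (I : finType) (i j : I) x y x' y' : i != j ->
  L i j x y = L i j x' y' -> x = x' /\ y = y'.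
Proof.
move=> ij E; split.
  by have := congr1 (fun f : vec I => f i) E; rewrite /= !L_i.
by have := congr1 (fun f : vec I => f j) E; rewrite /= !L_j.
Qed.

Lemma sum_L (I : finType) (i j : I) x y (c : I -> int) : i != j ->
  \sum_k L i j x y k * c k = x * c i + y * c j.
Proof.
move=> ij; rewrite (bigD1 i) //= (bigD1 j) /=; last by rewrite eq_sym.
rewrite big1 ?addr0.
  by rewrite L_i // L_j // addrA.
by move=> k /andP [ki kj]; rewrite L_coord (negbTE ki) (negbTE kj) /=; ring.
Qed.

Lemma sigma_L (I : finType) (A : Type) (C : A -> I -> I -> int) a (i j : I) x y : i != j ->
  sigma C i a (L i j x y) = L i j (x - (x * C a i i + y * C a i j)) y.
Proof. by move=> ij; rewrite /sigma sum_L // /L mulrzBr addrAC. Qed.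

Lemma alpha_L (I : finType) (i j : I) : alpha i = L i j 1 0 /\ alpha j = L i j 0 1.
Proof. by rewrite /L !mulr1z !mulr0z addr0 add0r. Qed.

Lemma in_coneP (I : finType) (i j : I) v :
  in_cone i j v <-> exists p q : int, [/\ 0 <= p, 0 <= q & v = L i j p q].
Proof.
split.
  by move=> [p [q ->]]; exists p%:Z, q%:Z; split.
by move=> [[p|p] [[q|q] []]] // _ _ ->; exists p, q.
Qed.

Lemma sign_root (I : finType) (A : Type) (rho : I -> A -> A) (C : A -> I -> I -> int)
  (R : A -> vec I -> Prop) b v :
  root_system rho C R -> R b v -> (forall k, 0 <= v k) \/ (forall k, v k <= 0).
Proof.
case=> R1 _ _ _ /R1 [[_ nv]|[w [[_ nw] ->]]]; [by left | right => k].
by rewrite ffunE oppr_le0.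
Qed.

Lemma mixed (I : finType) (A : Type) (rho : I -> A -> A) (C : A -> I -> I -> int)
  (R : A -> vec I -> Prop) b v (i j : I) :
  root_system rho C R -> R b v -> v i < 0 -> 0 < v j -> False.
Proof.
move=> rs /(sign_root rs) [H|H] vi vj.
  by have := H i; rewrite leNgt vi.
by have := H j; rewrite leNgt vj.
Qed.

Lemma R_alpha (I : finType) (A : Type) (rho : I -> A -> A) (C : A -> I -> I -> int)
  (R : A -> vec I -> Prop) b k :
  root_system rho C R -> R b (alpha k).
Proof. by case=> _ R2 _ _; have [_ /(_ (or_introl erefl)) []] := R2 b k (alpha k). Qed.

Lemma R_mult (I : finType) (A : Type) (rho : I -> A -> A) (C : A -> I -> I -> int)
  (R : A -> vec I -> Prop) b (i j : I) x :
  root_system rho C R -> i != j -> R b (L i j 0 x) -> x = 1 \/ x = -1.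
Proof.
case=> _ R2 _ _ ij Rb.
have E : L i j 0 x = alpha j *~ x by rewrite /L mulr0z add0r.
have [/(_ (conj Rb (ex_intro _ x E)))] := R2 b j (L i j 0 x).
move=> [] /(congr1 (fun f : vec I => f j)); rewrite L_j //.
  by rewrite /alpha ffunE eqxx; left.
by rewrite ffunE /alpha ffunE eqxx; right.
Qed.

Lemma R_fwd (I : finType) (A : Type) (rho : I -> A -> A) (C : A -> I -> I -> int)
  (R : A -> vec I -> Prop) a i w :
  root_system rho C R -> R a w -> R (rho i a) (sigma C i a w).
Proof. by case=> _ _ R3 _ Rw; apply/R3; exists w. Qed.

Lemma R_back (I : finType) (A : Type) (rho : I -> A -> A) (C : A -> I -> I -> int)
  (R : A -> vec I -> Prop) a i w :
  cartan_scheme rho C -> root_system rho C R -> R (rho i a) w -> R a (sigma C i a w).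
Proof.
case=> _ C1 C2 [_ _ R3 _] Rw.
have -> : sigma C i a w = sigma C i (rho i a) w.
  by rewrite /sigma; congr (_ - _); congr (_ *~ _); apply: eq_bigr => k _; rewrite -C2.
by rewrite -{1}(C1 i a); apply/(R3 (rho i a) i); exists w.
Qed.

Lemma sig_pos (I : finType) (A : Type) (rho : I -> A -> A) (C : A -> I -> I -> int)
  (R : A -> vec I -> Prop) a (i j : I) p q :
  cartan_scheme rho C -> root_system rho C R -> i != j ->
  R a (L i j p q) -> 0 < q -> 0 <= - p - q * C a i j.
Proof.
move=> cs rs ij Ra q0.
have := R_fwd i rs Ra; rewrite sigma_L //.
have [gc _ _] := cs; have [-> _ _] := gc a.

move=> Rb; rewrite leNgt; apply/negP => neg.
apply: (mixed (i:=i) (j:=j) rs Rb); rewrite ?L_i ?L_j //; lia.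
Qed.

Lemma string (I : finType) (A : Type) (rho : I -> A -> A) (C : A -> I -> I -> int)
  (R : A -> vec I -> Prop) a (i j : I) :
  cartan_scheme rho C -> root_system rho C R -> i != j ->
  R a (L i j (- C a i j) 1).
Proof.
move=> cs rs ij.
have := R_back cs rs (R_alpha (rho i a) j rs).
rewrite (proj2 (alpha_L i j)) sigma_L //.
congr (R a (L i j _ 1)); ring.
Qed.

Lemma classify (I : finType) (A : Type) (rho : I -> A -> A) (C : A -> I -> I -> int)
  (R : A -> vec I -> Prop) a (i j : I) p q :
  cartan_scheme rho C -> root_system rho C R -> i != j ->
  R a (L i j p q) -> 0 <= p -> 0 <= q ->
  (p = 1 /\ q = 0) \/ (p = 0 /\ q = 1) \/
  [/\ 0 < p, 0 < q, 0 <= - p - q * C a i j & 0 <= - q - p * C a j i].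
Proof.
move=> cs rs ij Ra p0 q0.
have [pe|pn] := eqVneq p 0.
  move: Ra; rewrite pe => /(R_mult rs ij) [] q1; [right; left | exfalso]; lia.
have [qe|qn] := eqVneq q 0.
  move: Ra; rewrite qe L_swap => /(R_mult rs _); rewrite eq_sym => /(_ ij) [] p1;
    [left | exfalso]; lia.
right; right; split; try lia.
  by apply: (sig_pos cs rs ij Ra); lia.
by rewrite L_swap in Ra; apply: (sig_pos cs rs _ Ra); [rewrite eq_sym | lia].
Qed.

Definition three (I : finType) (i j : I) (v : vec I) :=
  v = alpha i \/ v = alpha i + alpha j \/ v = alpha j.

Lemma three_L (I : finType) (i j : I) : alpha i + alpha j = L i j 1 1.
Proof. by rewrite /L !mulr1z. Qed.

Lemma dir12 (I : finType) (A : Type) (rho : I -> A -> A) (C : A -> I -> I -> int)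
  (R : A -> vec I -> Prop) a (i j : I) :
  cartan_scheme rho C -> root_system rho C R -> i != j ->
  C a i j = -1 -> C a j i = -1 ->
  forall v, R a v /\ in_cone i j v <-> three i j v.
Proof.
move=> cs rs ij c1 c2 v; split.
  move=> [Ra /in_coneP [p [q [p0 q0 E]]]]; rewrite E in Ra *.
  have [[-> ->]|[[-> ->]|[pp qq h1 h2]]] := classify cs rs ij Ra p0 q0.
  - by left; rewrite (proj1 (alpha_L i j)).
  - by right; right; rewrite (proj2 (alpha_L i j)).
  have pq : p = q by rewrite c1 c2 in h1 h2; lia.
  rewrite -pq in Ra *.
  have := R_fwd i rs Ra; rewrite sigma_L //.
  have [gc _ _] := cs; have [-> _ _] := gc a; rewrite c1.
  have -> : p - (p * 2 + p * -1) = 0 by ring.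
  move=> /(R_mult rs ij) [] p1; last by exfalso; lia.
  by right; left; rewrite p1 three_L.
move=> [->|[->|->]]; split.
- exact: (R_alpha _ _ rs).
- by apply/in_coneP; exists 1, 0; split => //; rewrite (proj1 (alpha_L i j)).
- by rewrite three_L; have := string a cs rs ij; rewrite c1 opprK.
- by apply/in_coneP; exists 1, 1; split => //; rewrite three_L.
- exact: (R_alpha _ _ rs).
- by apply/in_coneP; exists 0, 1; split => //; rewrite (proj2 (alpha_L i j)).
Qed.

Lemma swapH2 (I : finType) (A : Type) (R : A -> vec I -> Prop) a (i j : I) :
  (forall v, R a v /\ in_cone i j v <-> three i j v) ->
  (forall v, R a v /\ in_cone j i v <-> three j i v).
Proof.
have cs : forall v, in_cone j i v <-> in_cone i j v.
  by move=> v; split; move=> [p [q ->]]; exists q, p; rewrite addrC.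
have ts : forall v, three j i v <-> three i j v.
  by move=> v; rewrite /three addrC; split => [[->|[->|->]]|[->|[->|->]]]; auto.
by move=> H v; rewrite cs ts.
Qed.

Lemma dir21 (I : finType) (A : Type) (rho : I -> A -> A) (C : A -> I -> I -> int)
  (R : A -> vec I -> Prop) a (i j : I) :
  cartan_scheme rho C -> root_system rho C R -> i != j ->
  (forall v, R a v /\ in_cone i j v <-> three i j v) -> C a i j = -1.
Proof.
move=> cs rs ij H.
have [gc _ _] := cs; have [_ gneg _] := gc a.
have cle := gneg _ _ ij.
have Hc : in_cone i j (L i j (- C a i j) 1).
  by apply/in_coneP; exists (- C a i j), 1; split => //; lia.
have [/(_ (conj (string (R:=R) a cs rs ij) Hc)) T _] := H (L i j (- C a i j) 1).
case: T => [|[]].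
- by rewrite (proj1 (alpha_L i j)) => /(L_inj ij) [].
- by rewrite three_L => /(L_inj ij) [] e _; lia.
rewrite (proj2 (alpha_L i j)) => /(L_inj ij) [] e _.
have [_ +] := H (L i j 1 1).
rewrite -three_L => /(_ (or_intror (or_introl erefl))) [R11 _].
rewrite three_L in R11; have := sig_pos cs rs ij R11 ltr01; lia.
Qed.

Lemma dir23 (I : finType) (A : Type) (R : A -> vec I -> Prop) a (i j : I) :
  i != j -> (forall v, R a v /\ in_cone i j v <-> three i j v) -> m_eq R a i j 3.
Proof.
move=> ij H; exists [:: alpha i; alpha i + alpha j; alpha j]; split => //.
  rewrite three_L; have [-> ->] := alpha_L i j.
  rewrite /= !inE !negb_or !andbT; repeat (apply/andP; split); apply/eqP => /(L_inj ij) []; lia.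
move=> v; rewrite H /three !inE; split.
  by move=> /orP [/eqP ->|/orP [/eqP ->|/eqP ->]]; auto.
by move=> [->|[->|->]]; rewrite eqxx ?orbT.
Qed.

Lemma dir31 (I : finType) (A : Type) (rho : I -> A -> A) (C : A -> I -> I -> int)
  (R : A -> vec I -> Prop) a (i j : I) :
  cartan_scheme rho C -> root_system rho C R -> i != j ->
  m_eq R a i j 3 -> C a i j = -1 /\ C a j i = -1.
Proof.
move=> cs rs ij [s [us ss Hs]].
have ji : j != i by rewrite eq_sym.
have root_s : forall v, v \in s -> exists p q,
    [/\ 0 <= p, 0 <= q, R a (L i j p q) & v = L i j p q].
  move=> v /Hs [Ra /in_coneP [p [q [p0 q0 E]]]].
  by exists p, q; split => //; rewrite -E.
have inS : forall p q, 0 <= p -> 0 <= q -> R a (L i j p q) -> L i j p q \in s.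
  by move=> p q p0 q0 Ra; apply/Hs; split => //; apply/in_coneP; exists p, q.
have [gc _ _] := cs; have [_ gneg _] := gc a.
have c1 := gneg _ _ ij; have c2 := gneg _ _ ji.
have small : C a i j = 0 \/ C a j i = 0 -> False.
  move=> c0.
  have : (size s <= size [:: L i j 1 0; L i j 0 1])%N.
    apply: uniq_leq_size us _ => v /root_s [p [q [p0 q0 Ra ->]]].
    have [[-> ->]|[[-> ->]|[pp qq h1 h2]]] := classify cs rs ij Ra p0 q0.
    - by rewrite inE eqxx.
    - by rewrite !inE eqxx orbT.
    - by exfalso; case: c0 => c0; rewrite c0 in h1 h2; lia.
  by rewrite ss.
case: (boolP ((C a i j == -1) && (C a j i == -1))) => [/andP [/eqP ? /eqP ?] //|nb].
exfalso.
have c1' : C a i j < 0.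
  rewrite lt_neqAle c1 andbT; apply/eqP => e; exact: small (or_introl e).
have c2' : C a j i < 0.
  rewrite lt_neqAle c2 andbT; apply/eqP => e; exact: small (or_intror e).
have : (size [:: L i j 1 0; L i j 0 1; L i j (- C a i j) 1; L i j 1 (- C a j i)] <= size s)%N.
  apply: uniq_leq_size.
    rewrite /= !inE !negb_or !andbT; repeat (apply/andP; split);
      apply/eqP => /(L_inj ij) [] e e'; try lia.
  move=> v; rewrite !inE => /orP [/eqP ->|/orP [/eqP ->|/orP [/eqP ->|/eqP ->]]].
  - by apply: inS => //; rewrite -(proj1 (alpha_L i j)); apply: R_alpha rs.
  - by apply: inS => //; rewrite -(proj2 (alpha_L i j)); apply: R_alpha rs.
  - by apply: inS; [lia | done | apply: string cs rs ij].
  - apply: inS; [done | lia | rewrite L_swap; apply: string cs rs ji].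
by rewrite ss.
Qed.

Theorem lemma4p8 (I : finType) (A : Type) (rho : I -> A -> A)
  (C : A -> I -> I -> int) (R : A -> vec I -> Prop) :
  cartan_scheme rho C -> connected_scheme rho -> root_system rho C R ->
  forall (a : A) (i j : I), i != j ->
  ((C a i j = -1 /\ C a j i = -1) <->
     (forall v, R a v /\ in_cone i j v <->
        v = alpha i \/ v = alpha i + alpha j \/ v = alpha j)) /\
  ((forall v, R a v /\ in_cone i j v <->
        v = alpha i \/ v = alpha i + alpha j \/ v = alpha j) <->
     m_eq R a i j 3).
Proof.
move=> cs _ rs a i j ij.
have ji : j != i by rewrite eq_sym.
have d21 : (forall v, R a v /\ in_cone i j v <-> three i j v) ->
    C a i j = -1 /\ C a j i = -1.
  move=> H; split; first exact: dir21 cs rs ij H.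
  exact: dir21 cs rs ji (swapH2 H).
split; split.
- by move=> [c1 c2]; apply: dir12 cs rs ij c1 c2.
- exact: d21.
- exact: dir23 ij.
- by move=> /(dir31 cs rs ij) [c1 c2]; apply: dir12 cs rs ij c1 c2.
Qed.
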